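(* Let $(x,P)$ be a mechanism satisfying the incentive compatibility constraints, and let $v(\theta)=CPT(\theta,x(\theta),P_\theta)$. Define \[P^*_\theta(y)=\begin{cases}0 & \text{if } y\ge\frac{\mu^*}{\lambda p^*}\big(\theta w_+(x(\theta))-v(\theta)\big),\\ p^* & \text{if } y<\frac{\mu^*}{\lambda p^*}\big(\theta w_+(x(\theta))-v(\theta)\big).\end{cases}\] Then the mechanism $(x,P^* )$ is incentive compatible and yields expected profit at least as high as $(x,P)$.
   Context: $\lambda>0$; $w_+,w_-:[0,1]\to[0,1]$ strictly increasing, thrice differentiable, $w_\pm(0)=0$, $w_\pm(1)=1$, $w_\pm'(0),w_\pm'(1)>1$, $w_\pm'''>0$. $\mu^*=\max_{p\in(0,1]}p/w_-(p)$ and $p^*\in(0,1)$ is the unique point with $\mu^*w_-(p^* )=p^*$. The buyer's value $\theta\in[\underline\theta,\overline\theta]$ is private, with prior $F$ having positive density $f$. A (direct) mechanism $(x,P)$ specifies for each reported type $\theta$ a delivery probability $x(\theta)\in[0,1]$ and the tail $P_\theta(y)=P(T(\theta)>y)$ of a nonnegative random price $T(\theta)$. $CPT(\theta,x,P)=\theta w_+(x)-\lambda\int_0^\infty w_-(P(y))dy$. Incentive compatibility: $CPT(\theta,x(\theta),P_\theta)\ge CPT(\theta,x(\hat\theta),P_{\hat\theta})$ for all $\theta,\hat\theta$. Expected profit: $\int_{\underline\theta}^{\overline\theta}\int_0^\infty P_\theta(y)dy\,f(\theta)d\theta$. *)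

(* Defs.v *)
From HB Require Import structures.
From mathcomp Require Import all_boot all_order all_algebra.
From mathcomp Require Import all_classical all_reals all_analysis.
Set Implicit Arguments. Unset Strict Implicit. Unset Printing Implicit Defensive.
Import Order.TTheory GRing.Theory Num.Theory numFieldNormedType.Exports.
Local Open Scope classical_set_scope.
Local Open Scope ring_scope.

Section Defs.
Variable R : realType.

Definition weighting (w : R -> R) : Prop :=
  [/\ (forall a b, 0 <= a -> a < b -> b <= 1 -> w a < w b),
      w 0 = 0 /\ w 1 = 1,
      (forall t, 0 < t < 1 ->
         [/\ derivable w t 1, derivable (derive1 w) t 1,
             derivable (derive1 (derive1 w)) t 1
           & 0 < derive1 (derive1 (derive1 w)) t]),
      (exists d0 : R, 1 < d0 /\ (w h - w 0) / h @[h --> 0^'+] --> d0)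
    & (exists d1 : R, 1 < d1 /\ (w h - w 1) / (h - 1) @[h --> 1^'-] --> d1)].

Definition is_tail (P : R -> R) : Prop :=
  exists mu : probability R R,
    mu `[0%R, +oo[%classic = 1%E /\ forall y, 0 <= y -> (P y)%:E = mu `]y, +oo[%classic.

Definition CPT (lam : R) (wp wm : R -> R) (theta x : R) (P : R -> R) : \bar R :=
  ((theta * wp x)%:E
   - lam%:E * \int[@lebesgue_measure R]_(y in `[0%R, +oo[%classic) (wm (P y))%:E)%E.

Definition mechanism (tl tu : R) (x : R -> R) (P : R -> R -> R) : Prop :=
  forall th, tl <= th <= tu -> 0 <= x th <= 1 /\ is_tail (P th).

Definition IC (lam : R) (wp wm : R -> R) (tl tu : R) (x : R -> R)
    (P : R -> R -> R) : Prop :=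
  forall th th', tl <= th <= tu -> tl <= th' <= tu ->
    (CPT lam wp wm th (x th') (P th') <= CPT lam wp wm th (x th) (P th))%E.

Definition profit (tl tu : R) (f : R -> R) (P : R -> R -> R) : \bar R :=
  (\int[@lebesgue_measure R]_(th in `[tl, tu]%classic)
     ((\int[@lebesgue_measure R]_(y in `[0%R, +oo[%classic) (P th y)%:E) * (f th)%:E))%E.

Definition vfun (lam : R) (wp wm : R -> R) (x : R -> R) (P : R -> R -> R)
    (th : R) : R := fine (CPT lam wp wm th (x th) (P th)).

Definition Pstar (lam mus ps : R) (wp wm : R -> R) (x : R -> R)
    (P : R -> R -> R) (th y : R) : R :=
  if y < mus / (lam * ps) * (th * wp (x th) - vfun lam wp wm x P th)
  then ps else 0.

End Defs.

(* Main.v *)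
Require Import Defs.
From HB Require Import structures.
From mathcomp Require Import all_boot all_order all_algebra.
From mathcomp Require Import all_classical all_reals all_analysis.
From mathcomp Require Import measurable_realfun.
From mathcomp Require Import ring lra.
Import Order.TTheory GRing.Theory Num.Theory numFieldNormedType.Exports.
Local Open Scope classical_set_scope.
Local Open Scope ring_scope.

Lemma le_int_nm (R : realType) d (T : measurableType d) (mu : {measure set T -> \bar R})
  (D : set T) (f g : T -> \bar R) :
  (forall x, D x -> (0 <= f x)%E) -> (forall x, D x -> (f x <= g x)%E) ->
  (\int[mu]_(x in D) f x <= \int[mu]_(x in D) g x)%E.
Proof.
move=> f0 fg; rewrite !(integral_mkcond D) !ge0_integralTE; last 2 first.
- move=> x; rewrite /patch; case: ifP => // /set_mem Dx.
  by apply: le_trans (f0 _ Dx) (fg _ Dx).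
- by move=> x; rewrite /patch; case: ifP => // /set_mem Dx; apply: f0.
apply: ereal_sup_le => _ [h hf <-]; exists h => //= x.
apply: le_trans (hf x) _; rewrite /patch; case: ifP => // /set_mem Dx.
exact: fg.
Qed.

Lemma int_step (R : realType) (a c : R) : 0 <= a -> 0 <= c ->
  (\int[@lebesgue_measure R]_(y in `[0%R, +oo[%classic)
      (if y < c then a else 0)%:E = (a * c)%:E)%E.
Proof.
move=> a0 c0.
transitivity (\int[@lebesgue_measure R]_(y in `[0%R, +oo[%classic)
   (a%:E * (\1_(`[0%R, c[%classic : set R) y)%:E))%E.
  apply: eq_integral => y; rewrite inE /= in_itv /= andbT => y0.
  rewrite indicE /=.
  have -> : (y \in (`[0%R, c[%classic : set R)) = (y < c).
    by apply/idP/idP; rewrite in_setE /= in_itv /= y0.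
  by case: ifP => _ /=; rewrite ?mule1 ?mule0.
have mi : measurable_fun (`[0%R, +oo[%classic : set R) (EFin \o (\1_(`[0%R, c[%classic : set R) : R -> R)).
  by apply/measurable_EFinP; apply: measurable_funTS; exact: measurable_indic.
rewrite ge0_integralZl_EFin //.
rewrite integral_indic //.
rewrite (_ : _ `&` _ = `[0%R, c[%classic); last first.
  by apply/seteqP; split => y /=; rewrite !in_itv /= ?andbT; [case=> -> // | move=> /andP[-> ->]].
have := @lebesgue_measure_itv R `[0%R, c[ => /= ->; rewrite lte_fin.
case: ltP => [_|]; first by rewrite sube0 -EFinM.
by move=> cle; have -> : c = 0 by apply/le_anti; rewrite c0 cle.
Qed.
Lemma two_point_tail (R : realType) (p c : R) : 0 <= p <= 1 -> 0 <= c ->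
  is_tail (fun y => if y < c then p else 0).
Proof.
move=> /andP[p0 p1] c0.
have q0 : 0 <= 1 - p by rewrite subr_ge0.
pose mu0 : {measure set R -> \bar R} := measure_add (mscale (NngNum p0) (@dirac _ R c R))
                        (mscale (NngNum q0) (@dirac _ R 0 R)).
have mu0E B : mu0 B = (p * (c \in B)%:R + (1 - p) * (0 \in B)%:R)%:E.
  transitivity (measure_add (mscale (NngNum p0) (@dirac _ R c R))
                        (mscale (NngNum q0) (@dirac _ R 0 R)) B); first by [].
  rewrite measure_addE.
  rewrite [X in (X + _)%E](_ : _ = (p%:E * \d_c B)%E) //.
pose mu : probability R R := mnormalize mu0 (@dirac _ R 0 R).
have mu0T : mu0 [set: Real_sort__canonical__measurable_structure_Measurable R] = 1%E.
  by rewrite mu0E !mem_set //= !mulr1 subrKC.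
have muE B : mu B = mu0 B.
  transitivity (mnormalize mu0 (@dirac _ R 0 R) B); first by [].
  rewrite /mnormalize mu0T /=.
  by rewrite onee_eq0 /= invr1 mule1.
exists mu; split.
  rewrite muE mu0E.
  rewrite (_ : c \in _ = true); last by apply/mem_set; rewrite /= in_itv /= c0.
  rewrite (_ : 0 \in _ = true); last by apply/mem_set; rewrite /= in_itv /= lexx.
  by rewrite !mulr1 subrKC.
move=> y y0; rewrite muE mu0E.
rewrite (_ : 0 \in _ = false); last first.
  by apply/negbTE/negP; rewrite in_setE /= in_itv /= andbT ltNge y0.
rewrite (_ : c \in _ = (y < c)); last first.
  by apply/idP/idP; rewrite in_setE /= in_itv /= andbT.
by rewrite mulr0 addr0; case: ltP => _; rewrite ?mulr1 ?mulr0.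
Qed.

Lemma weighting_facts (R : realType) (w : R -> R) : weighting (R:=R) w ->
  [/\ w 0 = 0, w 1 = 1,
      (forall a b, 0 <= a -> a <= b -> b <= 1 -> w a <= w b)
    & (forall a, 0 < a <= 1 -> 0 < w a)].
Proof.
case=> winc [w0 w1] _ _ _; split => //.
- move=> a b a0 ab b1; case: (ltgtP a b) ab => // [lab _|-> _]; last exact: lexx.
  by apply/ltW/winc.
- by move=> a /andP[a0 a1]; rewrite -w0; apply: winc.
Qed.

Lemma tail_facts (R : realType) (P : R -> R) : is_tail P ->
  (forall y, 0 <= y -> 0 <= P y <= 1) /\
  (forall y z, 0 <= y -> y <= z -> P z <= P y).
Proof.
case=> mu [_ hP]; split.
- move=> y y0; rewrite -!lee_fin hP //; apply/andP; split => //.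
  exact: probability_le1.
- move=> y z y0 yz; rewrite -lee_fin !hP //; last exact: le_trans yz.
  apply: le_measure; rewrite ?inE //.
  by move=> t /=; rewrite !in_itv /= !andbT; apply: le_lt_trans.
Qed.

Lemma cut_simpl (R : realType) (a1 a2 a3 a4 a5 : R) : a1 != 0 -> a2 != 0 ->
  a3 / (a1 * a2) * (a4 - (a4 - a1 * a5)) = a3 / a2 * a5.
Proof. by move=> h1 h2; field; rewrite h1 h2. Qed.

Theorem lemma6 (R : realType) (lam : R) (wp wm : R -> R) (mus ps : R)
  (tl tu : R) (f : R -> R) (x : R -> R) (P : R -> R -> R) :
  0 < lam ->
  weighting wp -> weighting wm ->
  (* mus = max over p in (0,1] of p / w_-(p) *)
  (forall p, 0 < p <= 1 -> p / wm p <= mus) ->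
  (exists p, 0 < p <= 1 /\ p / wm p = mus) ->
  (* ps is the unique point of (0,1) with mus w_-(ps) = ps *)
  0 < ps < 1 -> mus * wm ps = ps ->
  (forall q, 0 < q < 1 -> mus * wm q = q -> q = ps) ->
  (* type space and prior with positive density f *)
  tl < tu ->
  measurable_fun `[tl, tu]%classic f ->
  (forall th, tl <= th <= tu -> 0 < f th) ->
  (\int[@lebesgue_measure R]_(th in `[tl, tu]%classic) (f th)%:E = 1)%E ->
  (* (x, P) is an incentive-compatible mechanism with real CPT values *)
  mechanism tl tu x P ->
  (forall th, tl <= th <= tu ->
     (\int[@lebesgue_measure R]_(y in `[0%R, +oo[%classic) (wm (P th y))%:E < +oo)%E) ->
  IC lam wp wm tl tu x P ->
  [/\ mechanism tl tu x (Pstar lam mus ps wp wm x P),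
      IC lam wp wm tl tu x (Pstar lam mus ps wp wm x P)
    & (profit tl tu f P <= profit tl tu f (Pstar lam mus ps wp wm x P))%E].
Proof.
move=> lam0 _ hwm musmax _ /andP[ps0 ps1] musps _ _ _ fpos _ mech Ifin ic.
have [w0 w1 wle wpos] := @weighting_facts R wm hwm.
have mus0 : 1 <= mus by have := musmax 1; rewrite ltr01 lexx w1 divr1; apply.
have tailP th : tl <= th <= tu -> is_tail (P th) by move=> h; case: (mech th h).
have Pb th y : tl <= th <= tu -> 0 <= y -> 0 <= P th y <= 1.
  by move=> h y0; have [+ _] := @tail_facts R _ (tailP th h); apply.
have Ige0 th : tl <= th <= tu ->
    (0 <= \int[@lebesgue_measure R]_(y in `[0%R, +oo[%classic) (wm (P th y))%:E)%E.
  move=> h; apply: integral_ge0 => y; rewrite /= in_itv /= andbT => y0.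
  have /andP[a b] := Pb th y h y0.
  by rewrite lee_fin -w0; apply: wle.
pose K th := fine (\int[@lebesgue_measure R]_(y in `[0%R, +oo[%classic) (wm (P th y))%:E).
have IE th : tl <= th <= tu ->
  (\int[@lebesgue_measure R]_(y in `[0%R, +oo[%classic) (wm (P th y))%:E = (K th)%:E)%E.
  move=> h; rewrite /K fineK // ge0_fin_numE //; [exact: Ifin | exact: Ige0].
clearbody K.
have Kge0 th : tl <= th <= tu -> 0 <= K th.
  by move=> h; rewrite -lee_fin -IE //; apply: Ige0.
have vE th : tl <= th <= tu -> vfun lam wp wm x P th = th * wp (x th) - lam * K th.
  by move=> h; rewrite /vfun /CPT IE // -EFinM -EFinB.
have ps0' : ps != 0 by rewrite gt_eqF.
have lam0' : lam != 0 by rewrite gt_eqF.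
have PsE th : tl <= th <= tu -> Pstar lam mus ps wp wm x P th =
    (fun y => if y < mus / ps * K th then ps else 0).
  move=> h; apply/funext => y; rewrite /Pstar vE //.
  have -> : mus / (lam * ps) * (th * wp (x th) - (th * wp (x th) - lam * K th)) = mus / ps * K th by apply: cut_simpl.
  by [].
have cge0 th : tl <= th <= tu -> 0 <= mus / ps * K th.
  move=> h; apply: mulr_ge0; last exact: Kge0.
  by apply: divr_ge0; [apply: le_trans mus0 | apply: ltW].
have IsE th : tl <= th <= tu ->
  (\int[@lebesgue_measure R]_(y in `[0%R, +oo[%classic)
     (wm (Pstar lam mus ps wp wm x P th y))%:E = (K th)%:E)%E.
  move=> h; rewrite PsE //.
  transitivity (\int[@lebesgue_measure R]_(y in `[0%R, +oo[%classic)
     (if y < mus / ps * K th then wm ps else 0)%:E)%E.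
    by apply: eq_integral => y _; case: ifP => _; rewrite ?w0.
  have wps0 : 0 <= wm ps by apply: ltW; apply: wpos; rewrite ps0 ltW.
  rewrite int_step //; last exact: cge0.
  congr (_%:E); rewrite mulrA mulrA (mulrC (wm ps)) musps.
  by rewrite divff // mul1r.
have CPTs th th' : tl <= th' <= tu ->
  CPT lam wp wm th (x th') (Pstar lam mus ps wp wm x P th') =
  CPT lam wp wm th (x th') (P th').
  by move=> h; rewrite /CPT IsE // IE.
have domE th : `[tl, tu]%classic th -> tl <= th <= tu.
  by rewrite /= in_itv.
split.
- move=> th h; split; first by case: (mech th h).
  rewrite PsE //; apply: two_point_tail; last exact: cge0.
  by rewrite ltW // ltW.
- move=> th th' h h'; rewrite !CPTs //; exact: ic.
- apply: le_int_nm.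
  + move=> th /domE h; apply: mule_ge0; last by rewrite lee_fin ltW // fpos.
    apply: integral_ge0 => y; rewrite /= in_itv /= andbT => y0.
    by rewrite lee_fin; case/andP: (Pb th y h y0).
  + move=> th /domE h; apply: lee_pmul; last exact: lexx.
    * apply: integral_ge0 => y; rewrite /= in_itv /= andbT => y0.
      by rewrite lee_fin; case/andP: (Pb th y h y0).
    * by rewrite lee_fin ltW // fpos.
    have ps0w : 0 <= ps by apply: ltW.
    rewrite PsE // int_step ?cge0 //.
    have -> : ps * (mus / ps * K th) = mus * K th.
      by rewrite mulrA mulrCA divff // mulr1.
    have [_ Pmono] := @tail_facts R _ (tailP th h).
    have mg : measurable_fun (`[0%R, +oo[%classic : set R)
        (EFin \o (fun y => wm (P th y))).
      apply/measurable_EFinP.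
      have mg' : measurable_fun (`[0%R, +oo[%classic : set R)
          (fun y => wm (P th (Order.max 0 y))).
        apply: nonincreasing_measurable => // a b ab.
        have ha : 0 <= Order.max 0 a by rewrite le_max lexx.
        have hb : Order.max 0 a <= Order.max 0 b by apply: le_max2.
        have /andP[Pb0 _] := Pb th (Order.max 0 b) h (le_trans ha hb).
        have /andP[_ Pa1] := Pb th (Order.max 0 a) h ha.
        by apply: wle => //; apply: Pmono.
      apply: eq_measurable_fun mg' => y.
      by rewrite inE /= in_itv /= andbT => y0; rewrite max_r.
    apply: (@le_trans _ _ (\int[@lebesgue_measure R]_(y in `[0%R, +oo[%classic)
              ((mus%:E * (wm (P th y))%:E)))%E).
      apply: le_int_nm => y; rewrite /= in_itv /= andbT => y0.
        by rewrite lee_fin; case/andP: (Pb th y h y0).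
      rewrite -EFinM lee_fin.
      have /andP[Py0 Py1] := Pb th y h y0.
      case: (ltgtP 0 (P th y)) Py0 => // [Ppos _|<- _]; last by rewrite w0 mulr0.
      have wP : 0 < wm (P th y) by apply: wpos; rewrite Ppos Py1.
      by rewrite -ler_pdivrMr //; apply: musmax; rewrite Ppos Py1.
    have mus0w : 0 <= mus by apply: le_trans mus0.
    have -> : (\int[@lebesgue_measure R]_(y in `[0%R, +oo[%classic)
              ((mus%:E * (wm (P th y))%:E)) =
        mus%:E * \int[@lebesgue_measure R]_(y in `[0%R, +oo[%classic) (wm (P th y))%:E)%E.
      apply: ge0_integralZl_EFin => //.
      move=> y; rewrite /= in_itv /= andbT => y0.
      have /andP[a b] := Pb th y h y0.
      by rewrite lee_fin -w0; apply: wle.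
    by rewrite IE // EFinM.
Qed.
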